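(* Let $n,k_1,k_2$ be nonnegative integers with $k_1+k_2\le n$ and $\ell=n-k_1-k_2$. If $G\in\mathcal{T}$, then there is a matrix $G'\in\mathcal{U}$ such that the $\mathbb{Z}_4$-codes with generator matrices $G$ and $G'$ are equivalent.
   Context: $\mathbb{Z}_4=\{0,1,2,3\}$ is the ring of integers modulo $4$; a $\mathbb{Z}_4$-code of length $n$ is a submodule of $\mathbb{Z}_4^n$, and two codes are equivalent if one is obtained from the other by permuting coordinates and changing the signs of some coordinates. Order $\mathbb{Z}_4$ by $0<1<2<3$ and order vectors lexicographically. Let $M_{m\times n}(R)$ denote the set of $m\times n$ matrices with entries in $R$. For $T\subset M_{m\times n}(\mathbb{Z}_4)$ let $P_{row}(T)$ be the set of matrices in $T$ whose rows $a_1,\dots,a_m$ satisfy $a_i\le a_j$ whenever $i\le j$. For $(0,1)$-matrices $A$ ($k_1\times k_2$), $D$ ($k_2\times\ell$) and a $\mathbb{Z}_4$-matrix $B$ ($k_1\times\ell$), let $G(A,B,D)=\begin{pmatrix} I_{k_1} & A & B\\ O & 2I_{k_2} & 2D\end{pmatrix}$. Let $\mathcal{S}=\{G(A,B,D)\mid A\in M_{k_1\times k_2}(\{0,1\}),\ B\in M_{k_1\times\ell}(\mathbb{Z}_4),\ D\in M_{k_2\times\ell}(\{0,1\})\}$, $\mathcal{T}=\{G(A,B,D)\in\mathcal{S}\mid A\in P_{row}(M_{k_1\times k_2}(\{0,1\}))\}$. Let $\mathcal{B}$ be the set consisting of all $k_1\times\ell$ matrices with entries in $\{0,2\}$ together with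 all $k_1\times\ell$ $\mathbb{Z}_4$-matrices $B$ such that, for the smallest $i\in\{1,\dots,k_1\}$ for which the $i$-th row of $B$ contains an entry not in $\{0,2\}$, the $i$-th row of $B$ has all entries in $\{0,1,2\}$. Let $\mathcal{U}=\{G(A,B,D)\in\mathcal{T}\mid B\in\mathcal{B}\}$. *)

(* Defs.v *)
From HB Require Import structures.
From mathcomp Require Import all_boot all_order all_fingroup all_algebra.
Set Implicit Arguments. Unset Strict Implicit. Unset Printing Implicit Defensive.
Import GRing.Theory.
Local Open Scope ring_scope.

Notation Z4 := 'Z_4.

Definition lex_le (m : nat) (u v : 'rV[Z4]_m) : Prop :=
  u = v \/
  exists j : 'I_m, (forall j' : 'I_m, (j' < j)%N -> u ord0 j' = v ord0 j') /\
                   (val (u ord0 j) < val (v ord0 j))%N.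

Definition row_sorted (r c : nat) (A : 'M[Z4]_(r, c)) : Prop :=
  forall i j : 'I_r, (i <= j)%N -> lex_le (row i A) (row j A).

Definition binary_mx (r c : nat) (A : 'M[Z4]_(r, c)) : Prop :=
  forall i j, A i j = 0 \/ A i j = 1.

Definition in02 (x : Z4) : Prop := x = 0 \/ x = 2%:R.

Definition inB (k1 l : nat) (B : 'M[Z4]_(k1, l)) : Prop :=
  (forall i j, in02 (B i j)) \/
  exists i : 'I_k1,
    (exists j, ~ in02 (B i j)) /\
    (forall i' : 'I_k1, (i' < i)%N -> forall j, in02 (B i' j)) /\
    (forall j, B i j = 0 \/ B i j = 1 \/ B i j = 2%:R).

Definition Gmat (k1 k2 l : nat) (A : 'M[Z4]_(k1, k2)) (B : 'M[Z4]_(k1, l))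
  (D : 'M[Z4]_(k2, l)) : 'M[Z4]_(k1 + k2, k1 + (k2 + l)) :=
  block_mx 1%:M (row_mx A B) 0 (row_mx (2%:R *: 1%:M) (2%:R *: D)).

Definition inT (k1 k2 l : nat) (G : 'M[Z4]_(k1 + k2, k1 + (k2 + l))) : Prop :=
  exists A B D, binary_mx A /\ row_sorted A /\ binary_mx D /\ G = @Gmat k1 k2 l A B D.

Definition inU (k1 k2 l : nat) (G : 'M[Z4]_(k1 + k2, k1 + (k2 + l))) : Prop :=
  exists A B D, binary_mx A /\ row_sorted A /\ binary_mx D /\ inB B /\
    G = @Gmat k1 k2 l A B D.

Definition code (m n : nat) (G : 'M[Z4]_(m, n)) : {set 'rV[Z4]_n} :=
  [set c | [exists x : 'rV[Z4]_m, c == x *m G]].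

Definition monomial_map (n : nat) (s : 'S_n) (e : 'I_n -> bool) (c : 'rV[Z4]_n)
  : 'rV[Z4]_n := \row_j ((if e j then -1 else 1) * c ord0 (s j)).

Definition equiv_codes (n : nat) (C C' : {set 'rV[Z4]_n}) : Prop :=
  exists (s : 'S_n) (e : 'I_n -> bool), C' = [set monomial_map s e c | c in C].

(* Main.v *)
Require Import Defs.
From mathcomp Require Import all_boot all_order all_fingroup all_algebra.
Set Implicit Arguments. Unset Strict Implicit. Unset Printing Implicit Defensive.
Import GRing.Theory.
Local Open Scope ring_scope.

Lemma z4_cases (x : Z4) : [\/ x = 0, x = 1, x = 2%:R | x = 3%:R].
Proof.
case: x => [[|[|[|[|m]]]] Hm].
- by constructor 1; apply/val_inj.
- by constructor 2; apply/val_inj.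
- by constructor 3; apply/val_inj.
- by constructor 4; apply/val_inj.
- by [].
Qed.

Definition pm1 (x : Z4) := x = 1 \/ x = -1.

Lemma key_mm n (d : 'rV[Z4]_n) (c : 'rV[Z4]_n) :
  (forall j, pm1 (d 0 j)) ->
  monomial_map 1%g (fun j => d 0 j == -1) c = c *m diag_mx d.
Proof.
move=> Hd; apply/matrixP => i j; rewrite mul_mx_diag !mxE perm1 (ord1 i) mulrC.
by case: (Hd j) => ->; [rewrite (_ : (1 == -1 :> Z4) = false) | rewrite eqxx].
Qed.

Lemma equiv_diag m n (G : 'M[Z4]_(m, n)) (d : 'rV[Z4]_n) :
  (forall j, pm1 (d 0 j)) -> equiv_codes (code G) (code (G *m diag_mx d)).
Proof.
move=> Hd; exists 1%g, (fun j => d 0 j == -1); apply/setP => c.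
rewrite inE; apply/existsP/imsetP.
- case=> x /eqP ->; exists (x *m G); first by rewrite inE; apply/existsP; exists x.
  by rewrite key_mm // mulmxA.
- case=> c0; rewrite inE => /existsP [x /eqP ->] ->; exists x.
  by rewrite key_mm // mulmxA.
Qed.

Lemma two_neg (x : Z4) : 2%:R * x * -1 = 2%:R * x.
Proof. by case: (z4_cases x) => ->; apply/eqP. Qed.

Lemma Gmat_diag k1 k2 l (A : 'M[Z4]_(k1, k2)) B D (dB : 'rV[Z4]_l) :
  (forall j, pm1 (dB 0 j)) ->
  Gmat A B D *m diag_mx (row_mx (const_mx 1) (row_mx (const_mx 1) dB))
  = Gmat A (B *m diag_mx dB) D.
Proof.
move=> Hd; rewrite /Gmat !diag_mx_row !diag_const_mx mulmx_block.
rewrite !mulmx0 !mul0mx !addr0 !add0r mulmx1 !mul_row_block !mulmx0 !addr0 !add0r !mulmx1.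
congr block_mx; congr row_mx.
apply/matrixP => i j; rewrite mul_mx_diag !mxE.
case: (Hd j) => ->; first by rewrite mulr1.
by case: (z4_cases (D i j)) => ->; apply/eqP.
Qed.

Definition in02b (x : Z4) := (x == 0) || (x == 2%:R).

Lemma in02P x : in02 x <-> in02b x.
Proof.
rewrite /in02 /in02b; split; first by case=> ->; rewrite eqxx ?orbT.
by case/orP => /eqP ->; [left|right].
Qed.

Lemma pm1_row k1 k2 l (dB : 'rV[Z4]_l) j :
  (forall j, pm1 (dB 0 j)) ->
  pm1 ((row_mx (const_mx 1 : 'rV_k1) (row_mx (const_mx 1 : 'rV_k2) dB)) 0 j).
Proof.
move=> Hd; rewrite !mxE; case: splitP => a _; rewrite ?mxE; first by left.
by case: splitP => b _; rewrite ?mxE //; left.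
Qed.

Lemma main_B k1 l (B : 'M[Z4]_(k1, l)) :
  exists dB : 'rV[Z4]_l, (forall j, pm1 (dB 0 j)) /\ inB (B *m diag_mx dB).
Proof.
case: (boolP [exists i, exists j, ~~ in02b (B i j)]) => [/existsP [i1 Pi1] | H].
- case: (@arg_minnP _ i1 (fun i => [exists j, ~~ in02b (B i j)]) (fun i : 'I_k1 => val i) Pi1) => i0 Pi0 Hmin.
  exists (\row_j (if B i0 j == 3%:R then -1 else 1)); split.
    by move=> j; rewrite mxE; case: ifP => _; [right|left].
  right; exists i0; split; [|split].
  + case/existsP: Pi0 => j Hj; exists j; rewrite mul_mx_diag !mxE => /in02P.
    by move: Hj; case: (z4_cases (B i0 j)) => ->.
  + move=> i' Hi' j; rewrite mul_mx_diag !mxE; apply/in02P.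
    have : ~~ [exists j, ~~ in02b (B i' j)].
      by apply/negP => /Hmin; rewrite leqNgt Hi'.
    rewrite negb_exists => /forallP /(_ j); rewrite negbK.
    by case: (z4_cases (B i0 j)) => ->; case: (z4_cases (B i' j)) => ->.
  + move=> j; rewrite mul_mx_diag !mxE.
    case: (z4_cases (B i0 j)) => ->.
    * by left; apply/eqP.
    * by right; left; apply/eqP.
    * by right; right; apply/eqP.
    * by right; left; apply/eqP.
- exists (const_mx 1); split; first by left; rewrite mxE.
  left => i j; rewrite mul_mx_diag !mxE mulr1; apply/in02P.
  move: H; rewrite negb_exists => /forallP /(_ i).
  by rewrite negb_exists => /forallP /(_ j); rewrite negbK.
Qed.

Theorem mainTheorem10 (n k1 k2 : nat) (Hn : (k1 + k2 <= n)%N)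
  (G : 'M[Z4]_(k1 + k2, k1 + (k2 + (n - k1 - k2)))) :
  inT G ->
  exists G' : 'M[Z4]_(k1 + k2, k1 + (k2 + (n - k1 - k2))),
    inU G' /\ equiv_codes (code G) (code G').
Proof.
move=> [A [B [D [HA [HAs [HD ->]]]]]].
have [dB [HdB HB]] := main_B B.
exists (Gmat A (B *m diag_mx dB) D); split.
  by exists A, (B *m diag_mx dB), D.
rewrite -(Gmat_diag A B D HdB); apply: equiv_diag => j; exact: pm1_row.
Qed.
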